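(* Let $\alpha\in\mathbb{F}_q^*$, let $1\le k\le n$, and let $\mathscr{C}\subseteq\mathbb{F}_q^n$ be a linear code of dimension $n-k$. Then $\mathscr{C}$ is a skew $\alpha$-cyclic code if and only if $\mathscr{C}$ has a parity check matrix of the form $$[\,{}^tP,\ {}^t(P\tau),\ {}^t(P\tau^2),\ \dots,\ {}^t(P\tau^{n-1})\,]$$ for some $P\in\mathbb{F}_q^k$ and some semi-linear map $\tau=\Theta\circ T$ with $T\in GL(k,q)$, such that $P\tau^n=\alpha P$.
   Context: Let $\mathbb{F}_q$ be a finite field and $\theta$ a field automorphism of $\mathbb{F}_q$. A linear code $\mathscr{C}\subseteq\mathbb{F}_q^n$ is skew $\alpha$-cyclic if it is invariant under $(c_0,\dots,c_{n-1})\mapsto(\alpha\theta(c_{n-1}),\theta(c_0),\dots,\theta(c_{n-2}))$. Vectors are row vectors and ${}^tv$ denotes the transpose. For $P\in\mathbb{F}_q^k$ and $T\in GL(k,q)$, the semi-linear map $\tau=\Theta\circ T$ acts on the right by $P\tau:=\Theta(P)T$, where $\Theta(P)$ applies $\theta$ to each coordinate; $\tau^i$ is the $i$-fold iterate. A parity check matrix of an $[n,n-k]$-code $\mathscr{C}$ is a $k\times n$ matrix $H$ of rank $k$ with $\mathscr{C}=\{\vec c\in\mathbb{F}_q^n:\vec c\,{}^tH=0\}$. *)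

(* Defs.v *)
From HB Require Import structures.
From mathcomp Require Import all_boot all_order all_algebra all_field.
Set Implicit Arguments. Unset Strict Implicit. Unset Printing Implicit Defensive.
Import GRing.Theory.
Local Open Scope ring_scope.

(* Linear codes C ⊆ F^n are represented by a matrix whose row space is C;
   a codeword c : 'rV_n belongs to C iff (c <= C)%MS.  dim C = \rank C. *)

Definition skew_shift (F : fieldType) (theta : F -> F) (alpha : F) (n : nat)
  (c : 'rV[F]_n) : 'rV[F]_n :=
  \row_(i < n) ((if val i == 0%N then alpha else 1) * theta (c 0 (ord_pred i))).

Definition skew_cyclic (F : fieldType) (theta : F -> F) (alpha : F) (n : nat)
  (C : 'M[F]_n) : Prop :=
  forall c : 'rV[F]_n, (c <= C)%MS -> (skew_shift theta alpha c <= C)%MS.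

(* The semi-linear map tau = Theta o T acting on the right: P tau = Theta(P) T. *)
Definition tau_act (F : fieldType) (theta : F -> F) (k : nat) (T : 'M[F]_k)
  (P : 'rV[F]_k) : 'rV[F]_k := map_mx theta P *m T.

Definition tau_iter (F : fieldType) (theta : F -> F) (k : nat) (T : 'M[F]_k)
  (i : nat) (P : 'rV[F]_k) : 'rV[F]_k := iter i (tau_act theta T) P.

Definition skew_check_mx (F : fieldType) (theta : F -> F) (k n : nat)
  (T : 'M[F]_k) (P : 'rV[F]_k) : 'M[F]_(k, n) :=
  \matrix_(r < k, j < n) (tau_iter theta T j P) 0 r.

Definition parity_check (F : fieldType) (k n : nat) (C : 'M[F]_n)
  (H : 'M[F]_(k, n)) : Prop :=
  \rank H = k /\ forall c : 'rV[F]_n, (c <= C)%MS <-> c *m H^T = 0.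

(* Main.v *)
Require Import Defs.
From HB Require Import structures.
From mathcomp Require Import all_boot all_order all_algebra all_field.
From mathcomp Require Import zify.
Import GRing.Theory.
Local Open Scope ring_scope.
Set Implicit Arguments. Unset Strict Implicit.

Definition shiftl (F : fieldType) (alpha : F) (n : nat) (d : 'rV[F]_n) : 'rV[F]_n :=
  \row_(i < n) ((if val i == 0%N then alpha else 1) * d 0 (ord_pred i)).

Definition Bmat (F : fieldType) (alpha : F) (n k : nat) (G : 'M[F]_(n, k)) : 'M[F]_(n, k) :=
  \matrix_(j < n, r < k) ((if val (ordS j) == 0%N then alpha else 1) * G (ordS j) r).

Lemma Bmat_shift (F : fieldType) (alpha : F) (n k : nat) (G : 'M[F]_(n, k)) (d : 'rV[F]_n) :
  d *m Bmat alpha G = shiftl alpha d *m G.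
Proof.
apply/rowP => r; rewrite !mxE.
rewrite (reindex (@ord_pred n)); last first.
  by exists (@ordS n) => x _; rewrite (ordSK, ord_predK).
apply: eq_bigr => i _; rewrite !mxE ord_predK mulrA [d _ _ * _]mulrC.
by [].
Qed.

Lemma skew_shiftE (F : fieldType) (theta : {rmorphism F -> F}) alpha n (c : 'rV[F]_n) :
  skew_shift theta alpha c = shiftl alpha (map_mx theta c).
Proof. by apply/rowP => i; rewrite !mxE. Qed.

Lemma ker_mat (F : fieldType) (n k : nat) (A B : 'M[F]_(n, k)) :
  (forall d : 'rV_n, d *m A = 0 -> d *m B = 0) ->
  forall p (D : 'M_(p, n)), D *m A = 0 -> D *m B = 0.
Proof.
move=> H p D D0; apply/row_matrixP => i; rewrite row0 row_mul; apply: H.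
by rewrite -row_mul D0 row0.
Qed.

Lemma exists_T (F : fieldType) (n k : nat) (A B : 'M[F]_(n, k)) :
  row_full A ->
  (forall d : 'rV_n, d *m A = 0 <-> d *m B = 0) ->
  exists T, T \in unitmx /\ A *m T = B.
Proof.
move=> fA H.
have HAB := @ker_mat _ _ _ A B (fun d => proj1 (H d)).
have HBA := @ker_mat _ _ _ B A (fun d => proj2 (H d)).
have rB : row_full B.
  have e1 : \rank (kermx A) = \rank (kermx B).
    apply/eqP; rewrite eqn_leq !mxrankS //; apply/sub_kermxP.
      by apply: HBA; apply/sub_kermxP.
    by apply: HAB; apply/sub_kermxP.
  move: e1; rewrite !mxrank_ker; move: fA; rewrite /row_full => /eqP rA.
  rewrite rA => e1.
  have := rank_leq_col B; have := rank_leq_col A; rewrite rA => kn _.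
  have hn : (k <= n)%N by rewrite -rA rank_leq_row.
  apply/eqP; move: (rank_leq_col B) (rank_leq_row B) e1 hn; lia.
case/row_fullP: fA => X XA; case/row_fullP: rB => Y YB.
have AXB : A *m X *m B = B.
  apply/eqP; rewrite -subr_eq0 -{2}[B]mul1mx -mulmxBl; apply/eqP; apply: HAB.
  by rewrite mulmxBl -mulmxA XA mulmx1 mul1mx subrr.
have BYA : B *m Y *m A = A.
  apply/eqP; rewrite -subr_eq0 -{2}[A]mul1mx -mulmxBl; apply/eqP; apply: HBA.
  by rewrite mulmxBl -mulmxA YB mulmx1 mul1mx subrr.
exists (X *m B); split; last by rewrite mulmxA.
have : (X *m B) *m (Y *m A) = 1%:M.
  by rewrite -!mulmxA (mulmxA B) BYA XA.
by case/mulmx1_unit.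
Qed.
Lemma inj_back (T : finType) (S : T -> T) (P : pred T) :
  injective S -> (forall x, P x -> P (S x)) -> forall x, P (S x) -> P x.
Proof.
move=> iS hS x Px.
set A := [set y | P y].
have eA : S @: A = A.
  apply/eqP; rewrite eqEcard card_imset // leqnn andbT.
  by apply/subsetP => y /imsetP [z]; rewrite !inE => hz ->; apply: hS.
have : S x \in S @: A by rewrite eA inE.
by case/imsetP => z; rewrite inE => hz /iS ->.
Qed.

Lemma skew_shift_inj (F : fieldType) (theta : {rmorphism F -> F}) alpha n :
  alpha != 0 -> injective (@skew_shift F theta alpha n).
Proof.
move=> anz c c' e; apply/rowP => i.
have := congr1 (fun v : 'rV_n => v 0 (ordS i)) e; rewrite !mxE ordSK.
case: eqP => _; last by rewrite !mul1r; apply: fmorph_inj.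
by move/(mulfI anz); apply: fmorph_inj.
Qed.

Lemma ker_sub (F : fieldType) m1 m2 n (A : 'M[F]_(m1, n)) (B : 'M[F]_(m2, n)) (c : 'rV_n) :
  (A <= B)%MS -> c *m B^T = 0 -> c *m A^T = 0.
Proof.
by case/submxP => D -> h; rewrite trmx_mul mulmxA h mul0mx.
Qed.

Lemma exists_H0 (F : fieldType) (k n : nat) (C : 'M[F]_n) :
  \rank C = (n - k)%N -> (k <= n)%N ->
  exists H0 : 'M[F]_(k, n), \rank H0 = k /\ forall c : 'rV_n, (c <= C)%MS <-> c *m H0^T = 0.
Proof.
move=> hr hkn.
set M := (cokermx C)^T.
have rM : \rank M = k by rewrite mxrank_tr mxrank_coker hr; lia.
have : exists H : 'M_(\rank M, n), (H == M)%MS.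
  by exists (row_base M); apply/eqmxP; exact: eq_row_base.
rewrite rM => -[H /andP [h1 h2]].
exists H; split.
  by have := mxrankS h1; have := mxrankS h2; rewrite rM => a b; apply/eqP; rewrite eqn_leq a b.
move=> c; rewrite submxE; split.
  by move/eqP => h; apply: (ker_sub h1); rewrite trmxK.
by move/(ker_sub h2); rewrite trmxK => ->.
Qed.
Unset Implicit Arguments.

Theorem mainTheorem5 (F : finFieldType) (theta : {rmorphism F -> F})
  (theta_bij : bijective theta) (alpha : F) (alpha_nz : alpha != 0)
  (k n : nat) (hk1 : (1 <= k)%N) (hkn : (k <= n)%N)
  (C : 'M[F]_n) (hdim : \rank C = (n - k)%N) :
  skew_cyclic theta alpha C <->
  exists (P : 'rV[F]_k) (T : 'M[F]_k),
    T \in unitmx /\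
    parity_check C (@skew_check_mx F theta k n T P) /\
    tau_iter theta T n P = alpha *: P.
Proof.
split.
- move=> hcyc.
  have [H0 [rH0 kerH0]] := exists_H0 hdim hkn.
  set G := H0^T.
  have npos : (0 < n)%N by lia.
  pose i0 := Ordinal npos.
  case: theta_bij => g thK gK.
  have key : forall d : 'rV_n, d *m map_mx theta G = 0 <-> d *m Bmat alpha G = 0.
    move=> d; set c := map_mx g d.
    have dE : d = map_mx theta c by apply/rowP=> i; rewrite !mxE gK.
    rewrite Bmat_shift dE -skew_shiftE -map_mxM.
    split.
      move/eqP; rewrite map_mx_eq0 => /eqP /kerH0 hc.
      by apply/kerH0; apply: hcyc.
    move/kerH0 => hs; apply/eqP; rewrite map_mx_eq0; apply/eqP/kerH0.
    exact: (@inj_back _ _ (fun x => (x <= C)%MS) (@skew_shift_inj _ theta alpha n alpha_nz) hcyc c hs).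
  have rfA : row_full (map_mx theta G).
    by rewrite /row_full mxrank_map mxrank_tr rH0.
  have [T [uT ATB]] := exists_T rfA key.
  exists (row i0 G), T.
  have iterE : forall j (hj : (j < n)%N), tau_iter theta T j (row i0 G) = row (Ordinal hj) G.
    elim=> [|j IH] hj; first by congr row; apply: val_inj.
    have hj' : (j < n)%N by lia.
    rewrite /tau_iter iterS -/(tau_iter theta T j _) (IH hj') /tau_act map_row -row_mul ATB.
    apply/rowP => r; rewrite !mxE.
    have -> : ordS (Ordinal hj') = Ordinal hj by apply: val_inj; rewrite /= modn_small.
    by rewrite /= mul1r.
  have hn1 : (n.-1 < n)%N by lia.
  have iterN : tau_iter theta T n (row i0 G) = alpha *: row i0 G.
    have -> : tau_iter theta T n (row i0 G) = tau_act theta T (tau_iter theta T n.-1 (row i0 G)).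
      by rewrite /tau_iter -iterS prednK.
    rewrite (iterE _ hn1) /tau_act map_row -row_mul ATB.
    apply/rowP => r; rewrite !mxE.
    have -> : ordS (Ordinal hn1) = i0 by apply: val_inj; rewrite /= prednK // modnn.
    by [].
  have HE : @skew_check_mx F theta k n T (row i0 G) = H0.
    apply/matrixP => r j; rewrite mxE (iterE _ (ltn_ord j)).
    have -> : Ordinal (ltn_ord j) = j by apply: val_inj.
    by rewrite !mxE.
  by rewrite HE; split => //; split.
- case=> P [T [uT [[rH kerH] hP]]] c hc.
  set H := @skew_check_mx F theta k n T P.
  apply/kerH; move/kerH: hc => hc.
  have HT : forall i r, H^T i r = tau_iter theta T i P 0 r by move=> i r; rewrite !mxE.
  have BE : Bmat alpha H^T = map_mx theta H^T *m T.
    apply/row_matrixP => j; rewrite row_mul -map_row.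
    have -> : row j H^T = tau_iter theta T j P by apply/rowP => r; rewrite mxE HT.
    rewrite -/(tau_act theta T _).
    have -> : tau_act theta T (tau_iter theta T j P) = tau_iter theta T j.+1 P by [].
    apply/rowP => r; rewrite /Bmat [in LHS]mxE [in LHS]mxE HT.
    case: (ltnP j.+1 n) => hj.
      have -> : ordS j = Ordinal hj by apply: val_inj; rewrite /= modn_small.
      by rewrite /= mul1r.
    have ej : j.+1 = n by have := ltn_ord j; lia.
    have -> : val (ordS j) = 0%N by rewrite /= ej modnn.
    rewrite eqxx ej hP mxE.
    have -> : nat_of_ord (ordS j) = 0%N by rewrite /= ej modnn.
    by [].
  rewrite skew_shiftE -Bmat_shift BE mulmxA -map_mxM hc map_mx0 mul0mx.
  by [].
Qed.
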